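(* Let $G=(V,E)$ be a social network with seller $s$ and buyers $N$, and let the fair diffusion mechanism (FDM) be as defined in the context. For every feasible action profile $a$, the seller's revenue under FDM, $\sum_{i\in N}p_i(a)$, is at least the seller's revenue under IDM, namely $v^{1^{st}}_{N_{-c_1}}$ (where $c_1$ is the first element of the strong critical ancestor sequence of the highest bidder $h$), and this in turn is at least the seller's revenue $v^{2^{nd}}_{r_s}$ of the Vickrey (second-price) auction held only among the seller's neighbours $r_s$, where $v^{2^{nd}}_{r_s}$ denotes the second-highest reported valuation among $r_s$.
   Context: Model. A seller $s$ sells one item on an undirected graph $G=(V,E)$ with $V=N\cup\{s\}$, $N=\{1,\dots,n\}$ the buyers. Each buyer $i$ has neighbour set $r_i\subseteq V$ and private valuation $v_i\ge 0$; her type is $\theta_i=(v_i,r_i)$; the seller's valuation is $0$ and $r_s$ denotes the seller's neighbours. Each buyer reports an action $a_i=(v_i',r_i')$ with $v_i'\ge0$ the reported valuation and $r_i'\subseteq r_i$ the neighbours she invites, or $a_i=nil$ if she does not participate. A profile $a$ is feasible if every $i$ with $a_i\neq nil$ is reachable by a path $s,k_1,\dots,k_m,i$ with $k_1\in r_s$, $k_{t+1}\in r'_{k_t}$ and $i\in r'_{k_m}$. All graph notions below refer to this reported network (participating buyers, with $j$ reachable from $i$ when $j\in r_i'$, and from $s$ when $j\in r_s$); $d_i$ is the length of the shortest such path from $s$ to $i$. A mechanism gives an allocation $\pi_i(a)\in\{0,1\}$ (at most one winner) and payments $p_i(a)\in\mathbb{R}$ (negative means $i$ receives money); the seller's revenue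 is $\sum_{i\in N}p_i(a)$. Definitions. A set $D\subseteq N$ is a cut set of buyer $i$ if no path from $s$ to $i$ exists without $D$; it is a minimal cut set if no proper subset is a cut set. $j$ is a critical ancestor of $i$ if $j$ belongs to a minimal cut set of $i$; a strong critical ancestor if $\{j\}$ is a minimal cut set of $i$; a weak critical ancestor if critical but not strong. $V_i=\{j\in N: i$ is a strong critical ancestor of $j\}$ (so $i\in V_i$); for $K\subseteq N$, $N_{-K}=N\setminus\bigcup_{i\in K}V_i$, and $N_{-i}=N_{-\{i\}}$. For $D\subseteq N$, $v_D^{1^{st}}=\max_{i\in D}v_i'$, and $g_D^{1^{st}}\in\arg\max_{i\in D}v^{1^{st}}_{V_i}$ (random tie-breaking). The strong critical ancestor sequence of $i$ is $C_i=(c_1^i,\dots,c_k^i)$, the strong critical ancestors of $i$ ordered by strictly increasing depth, with $c_k^i=i$. FDM. Let $h\in\arg\max_{i\in N}v_i'$ (random tie-breaking) and $C=(c_1,\dots,c_h)$ its strong critical ancestor sequence. For consecutive $c_j,c_{j+1}$, let $M_{c_jc_{j+1}}$ be the set of weak critical ancestors of $h$ lying on some simple path from $c_j$ to $c_{j+1}$ (for the last element the corresponding set $\{c_{j+1}\}\cup M_{c_jc_{j+1}}$ is empty). Allocation: the item goes to the first $c_j\in C$ (smallest $j$) with $v'_{c_j}=v^{1^{st}}_{N_{-(\{c_{j+1}\}\cup M_{c_jc_{j+1}})}}$; call it $c_w$, and let $\hat C=(c_1,\dots,c_w)$. Rewards: for $c_j\in\hat C$ (with $j\ge 2$), $R_{c_j}=\big(v^{1^{st}}_{N_{-(\{c_j\}\cup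 \{g^{1^{st}}_{M_{c_{j-1}c_j}}\})}}-v^{1^{st}}_{N_{-(\{c_j\}\cup M_{c_{j-1}c_j})}}\big)/(|M_{c_{j-1}c_j}|+1)$; for $i\in M_{c_{j-1}c_j}$, $R_i=\big(v^{1^{st}}_{N_{-(\{i\}\cup\{c_j\})}}-v^{1^{st}}_{N_{-(\{c_j\}\cup M_{c_{j-1}c_j})}}\big)/(|M_{c_{j-1}c_j}|+1)$; otherwise $R_i=0$. Payments: $p_{c_j}=v^{1^{st}}_{N_{-c_j}}-v^{1^{st}}_{N_{-(\{c_{j+1}\}\cup M_{c_jc_{j+1}})}}-R_{c_j}$ for $c_j\in\hat C$, $j<w$; $p_{c_w}=v^{1^{st}}_{N_{-c_w}}-R_{c_w}$; $p_i=-R_i$ for $i\in M_{c_{j-1}c_j}$, $2\le j\le w$; $p_i=0$ otherwise. IDM (the information diffusion mechanism of Li et al.) yields seller revenue $v^{1^{st}}_{N_{-c_1}}$ on the same profile. *)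

(* Defs.v *)
From HB Require Import structures.
From mathcomp Require Import all_boot all_order all_algebra.
Set Implicit Arguments. Unset Strict Implicit. Unset Printing Implicit Defensive.
Import Order.TTheory GRing.Theory Num.Theory.
Local Open Scope ring_scope.

Section FDM.
Variables (R : realFieldType) (T : finType).
(* rs : the seller's neighbours r_s (buyers are the elements of T) *)
Variable rs : {set T}.
(* action profile: a i = None means nil, a i = Some (v'_i, r'_i) *)
Variable a : T -> option (R * {set T}).

Definition part (i : T) : bool := a i != None.
Definition rval (i : T) : R := if a i is Some (x, _) then x else 0.
Definition rinv (i : T) : {set T} := if a i is Some (_, Sr) then Sr else set0.
(* N : participating buyers (all graph notions refer to the reported network) *)
Definition Npart : {set T} := [set i | part i].

(* edges of the reported network (None = seller s), with vertices of D removed *)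
Definition sedge (D : {set T}) (x y : option T) : bool :=
  match x, y with
  | None, Some j => [&& j \in rs, part j & j \notin D]
  | Some i, Some j => [&& part i, i \notin D, j \in rinv i, part j & j \notin D]
  | _, _ => false
  end.

Definition reach_avoid (D : {set T}) (i : T) : bool :=
  connect (sedge D) None (Some i).

Definition feasible : Prop := forall i, part i -> reach_avoid set0 i.

Definition cutset (D : {set T}) (i : T) : bool := ~~ reach_avoid D i.
Definition mincut (D : {set T}) (i : T) : bool :=
  cutset D i && [forall D' : {set T}, (D' \proper D) ==> ~~ cutset D' i].
Definition critical (j i : T) : bool := [exists D : {set T}, mincut D i && (j \in D)].
Definition strong (j i : T) : bool := mincut [set j] i.
Definition weak (j i : T) : bool := critical j i && ~~ strong j i.

(* V_i = { j | i is a strong critical ancestor of j } *)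
Definition Vset (i : T) : {set T} := [set j | strong i j].
Definition Nminus (K : {set T}) : {set T} := Npart :\: \bigcup_(i in K) Vset i.
Definition vmax (D : {set T}) : R := \big[Num.max/0]_(i in D) rval i.
(* v^{2nd}_D : second highest reported valuation in D (0 if |D| < 2) *)
Definition v2nd (D : {set T}) : R :=
  nth 0 (sort (fun x y : R => y <= x) [seq rval i | i <- enum D]) 1.

Definition reachk (k : nat) (i : T) : bool :=
  [exists p : k.-tuple (option T), path (sedge set0) None p && (last None p == Some i)].
(* d_i : length of a shortest path from s to i (shortest paths have <= #|T| edges) *)
Definition depth (i : T) : nat := find (fun k => reachk k i) (iota 0 #|T|.+1).

Definition Cseq (i : T) : seq T :=
  sort (fun x y => (depth x <= depth y)%N) (enum [set j | strong j i]).

Definition bedge (x y : T) : bool := [&& part x, y \in rinv x & part y].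
Definition onsp (x y z : T) : bool :=
  [exists k : 'I_#|T|, exists p : k.-tuple T,
     [&& path bedge x p, last x p == y, uniq (x :: p) & z \in x :: p]].

Definition highest (h : T) : Prop := part h /\ forall i, part i -> rval i <= rval h.

(* g D models {g^{1st}_D}: empty if D is empty, otherwise a singleton {x} with
   x in argmax_{i in D} v^{1st}_{V_i} (arbitrary tie-breaking) *)
Definition tiebreak (g : {set T} -> {set T}) : Prop :=
  forall D : {set T},
    (D = set0 -> g D = set0) /\
    (D != set0 -> exists x, [/\ g D = [set x], x \in D &
                               forall y, y \in D -> vmax (Vset y) <= vmax (Vset x)]).

Section Mechanism.
Variable h : T.
Variable g : {set T} -> {set T}.

Definition C : seq T := Cseq h.
(* c_j, 0-based: c 0 = c_1 of the paper *)
Definition cc (j : nat) : T := nth h C j.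
Definition Mset (j : nat) : {set T} :=
  if (j.+1 < size C)%N then [set z | weak z h && onsp (cc j) (cc j.+1) z] else set0.
Definition Kset (j : nat) : {set T} :=
  if (j.+1 < size C)%N then cc j.+1 |: Mset j else set0.
(* 0-based index of the winner c_w *)
Definition wi : nat :=
  find (fun j => rval (cc j) == vmax (Nminus (Kset j))) (iota 0 (size C)).
(* reward of c_j (0-based j >= 1, uses M between c_{j-1} and c_j) *)
Definition Rc (j : nat) : R :=
  if j is j'.+1 then
    (vmax (Nminus (cc j |: g (Mset j'))) - vmax (Nminus (cc j |: Mset j')))
      / (#|Mset j'|%:R + 1)
  else 0.
Definition Rm (m : nat) (i : T) : R :=
  (vmax (Nminus [set i; cc m.+1]) - vmax (Nminus (cc m.+1 |: Mset m)))
    / (#|Mset m|%:R + 1).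

Definition pay (i : T) : R :=
  if i \in take wi.+1 C then
    let j := index i C in
    (if (j < wi)%N then vmax (Nminus [set cc j]) - vmax (Nminus (Kset j))
     else vmax (Nminus [set cc j])) - Rc j
  else if has (fun m => i \in Mset m) (iota 0 wi) then
    - Rm (find (fun m => i \in Mset m) (iota 0 wi)) i
  else 0.

Definition fdm_revenue : R := \sum_(i : T) pay i.
Definition idm_revenue : R := vmax (Nminus [set cc 0]).
End Mechanism.

Definition vickrey_revenue : R := v2nd (rs :&: Npart).
End FDM.

(* Main.v *)
Require Import Defs.
From HB Require Import structures.
From mathcomp Require Import all_boot all_order all_algebra.
From mathcomp Require Import ring lra.
Import Order.TTheory GRing.Theory Num.Theory.
Local Open Scope ring_scope.

Lemma vmax_ge0 (R : realFieldType) (T : finType) (a : T -> option (R * {set T})) (D : {set T}) :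
  0 <= vmax a D.
Proof.
rewrite /vmax; apply: (big_rec (fun x => 0 <= x)) => // i x _ Hx.
by rewrite le_max Hx orbT.
Qed.

Lemma vmax_ge (R : realFieldType) (T : finType) (a : T -> option (R * {set T})) (D : {set T}) i :
  i \in D -> rval a i <= vmax a D.
Proof.
by move=> Hi; rewrite /vmax (bigD1 i) //= le_max lexx.
Qed.

Lemma vmax_le (R : realFieldType) (T : finType) (a : T -> option (R * {set T})) (D : {set T}) x :
  0 <= x -> (forall i, i \in D -> rval a i <= x) -> vmax a D <= x.
Proof.
move=> H0 H; rewrite /vmax; apply: (big_ind (fun y => y <= x)) => //.
  by move=> y z Hy Hz; rewrite ge_max Hy Hz.
Qed.

Lemma vmax_sub (R : realFieldType) (T : finType) (a : T -> option (R * {set T})) (D D' : {set T}) :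
  D \subset D' -> vmax a D <= vmax a D'.
Proof.
move=> /subsetP H; apply: vmax_le; first exact: vmax_ge0.
by move=> i /H; apply: vmax_ge.
Qed.

Lemma Nminus_sub (R : realFieldType) (T : finType) (rs : {set T}) (a : T -> option (R * {set T})) (K K' : {set T}) :
  K \subset K' -> Nminus rs a K' \subset Nminus rs a K.
Proof.
move=> /subsetP H; apply/subsetP => x; rewrite /Nminus !inE => /andP [Hx Hp].
rewrite Hp andbT; apply: contra Hx => /bigcupP [i Hi Hxi].
by apply/bigcupP; exists i => //; apply: H.
Qed.

Lemma vmaxN_sub (R : realFieldType) (T : finType) (rs : {set T}) (a : T -> option (R * {set T})) (K K' : {set T}) :
  K \subset K' -> vmax a (Nminus rs a K') <= vmax a (Nminus rs a K).
Proof. by move=> H; apply: vmax_sub; apply: Nminus_sub. Qed.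

Lemma v2nd_le (R : realFieldType) (T : finType) (a : T -> option (R * {set T})) (D : {set T}) x :
  v2nd a D <= vmax a (D :\ x).
Proof.
rewrite /v2nd.
set s := sort _ _.
have Hsort : sorted (fun x y : R => y <= x) s.
  apply: sort_sorted => u v; exact: le_total.
have Hperm : perm_eq s [seq rval a i | i <- enum D] by rewrite perm_sort.
clearbody s.
case: s Hsort Hperm => [|z [|y rest]] Hsort Hperm; first by rewrite /= vmax_ge0.
  by rewrite /= vmax_ge0.
rewrite /=.
case: (leP y (vmax a (D :\ x))) => // Hlt.
exfalso.
have Hzy : y <= z by move: Hsort; rewrite /= => /andP [].
have H2 : (2 <= count (fun v : R => (y <= v)%R) [:: z, y & rest])%N by rewrite /= Hzy lexx.
move: H2; rewrite (permP Hperm) count_map.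
have -> : count (preim (rval a) (fun v : R => (y <= v)%R)) (enum D) =
          count (fun i => (y <= rval a i) && (i \in D)) (enum D).
  by apply: eq_in_count => i; rewrite mem_enum => ->; rewrite andbT.
have Hsub : subpred (fun i => (y <= rval a i) && (i \in D)) (pred1 x).
  move=> i /= /andP [Hi HD]; case: (eqVneq i x) => // Hne; exfalso.
  have : rval a i <= vmax a (D :\ x) by apply: vmax_ge; rewrite !inE Hne HD.
  by move=> Hle; move: (le_lt_trans Hle Hlt); rewrite ltNge Hi.
move/(leq_trans)/(_ (sub_count Hsub (enum D))).
rewrite count_uniq_mem ?enum_uniq //.
by case: (x \in enum D).
Qed.

Lemma no_reach_in (R : realFieldType) (T : finType) (rs : {set T}) (a : T -> option (R * {set T})) (D : {set T}) i :
  i \in D -> ~~ reach_avoid rs a D i.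
Proof.
move=> Hi; apply/negP => /connectP [p Hp Hl].
case/lastP: p Hp Hl => [|q y] //.
rewrite rcons_path last_rcons => /andP [_ He] Hy; subst y.
move: He; case: (last None q) => [k|] /=; rewrite Hi /= ?andbF //.
Qed.

Lemma strong_self (R : realFieldType) (T : finType) (rs : {set T}) (a : T -> option (R * {set T})) h :
  reach_avoid rs a set0 h -> strong rs a h h.
Proof.
move=> Hr; rewrite /strong /mincut /cutset no_reach_in ?set11 //=.
apply/forallP => D'; apply/implyP => Hp; rewrite negbK.
have : D' \subset [set h] by apply: proper_sub.
rewrite subset1 => /orP [/eqP E|/eqP ->] //.
by move: Hp; rewrite E properE subxx.
Qed.

Lemma rs_notV (R : realFieldType) (T : finType) (rs : {set T}) (a : T -> option (R * {set T})) c j :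
  j \in rs -> part a j -> j != c -> j \notin Vset rs a c.
Proof.
move=> Hj Hp Hne; rewrite inE /strong /mincut /cutset negb_and; apply/orP; left.
rewrite negbK /reach_avoid; apply: connect1 => /=.
by rewrite Hj Hp inE Hne.
Qed.

Lemma reachkP (R : realFieldType) (T : finType) (rs : {set T}) (a : T -> option (R * {set T})) k i
  (p : seq (option T)) :
  size p = k -> path (sedge rs a set0) None p -> last None p = Some i -> reachk rs a k i.
Proof.
move=> Hs Hp Hl; subst k; apply/existsP; exists (in_tuple p).
by rewrite /= Hp Hl eqxx.
Qed.

Lemma depth_lt (R : realFieldType) (T : finType) (rs : {set T}) (a : T -> option (R * {set T})) h j :
  reach_avoid rs a set0 h -> strong rs a j h -> j != h -> (depth rs a j < depth rs a h)%N.
Proof.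
move=> Hr Hs Hne.
move/connectP: Hr => [p Hp Hl].
have [p' Hp' [Hu Hl']] : exists2 p', path (sedge rs a set0) None p' & uniq (None :: p') /\ last None p' = Some h.
  move: Hl. case/shortenP: Hp. move=> p' Hp' Hu _ Hl. exists p'. done. split. done. by rewrite Hl.
have Hsz : (size p' < #|T|.+1)%N.
  rewrite -card_option -ltnS -[(size p').+1]/(size (None :: p')).
  by rewrite -(card_uniqP Hu) ltnS max_card.
have Hhas : has (fun k => reachk rs a k h) (iota 0 #|T|.+1).
  apply/hasP; exists (size p'); first by rewrite mem_iota.
  exact: (reachkP _ _ _ _ _ _ p' erefl Hp' Hl').
have Hfind := Hhas; rewrite has_find size_iota in Hfind.
have Hd := nth_find 0%N Hhas; rewrite nth_iota // add0n in Hd.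
rewrite /depth -/(depth rs a h) in Hfind Hd *.
set d := depth rs a h in Hfind Hd *.
case/existsP: Hd => q /andP [Hq /eqP Hql].
have Hjq : Some j \in (q : seq _).
  apply/negPn/negP => Hnot.
  move: Hs; rewrite /strong /mincut /cutset => /andP [/negP Hc _]; apply: Hc.
  apply/connectP; exists q => //.
  apply: (sub_in_path (P := predC1 (Some j))); last exact: Hq.
    move=> x y; rewrite !inE => Hx Hy.
    case: x Hx => [x|] Hx; case: y Hy => [y|] Hy //=.
      move=> /and5P [H1 _ H3 H4 _]; rewrite H1 H3 H4 !inE /=.
      by apply/andP; split; [apply: contra Hx => /eqP -> | apply: contra Hy => /eqP ->].
    by move=> /and3P [H1 H2 _]; rewrite H1 H2 !inE; apply: contra Hy => /eqP ->.
  apply/allP => z Hz; rewrite !inE; apply/eqP => E; subst z.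
  by move: Hz; rewrite inE /= (negbTE Hnot).
set idx := index (Some j) q.
have Hidx : (idx < d)%N by rewrite -(size_tuple q) index_mem.
have Hidx2 : (idx.+1 < d)%N.
  rewrite ltn_neqAle Hidx andbT; apply/eqP => E.
  have : nth None q idx = Some h by rewrite -Hql -nth_last size_tuple; have -> : d.-1 = idx by rewrite -E.
  by rewrite nth_index // => -[/eqP]; rewrite (negbTE Hne).
have Hrj : reachk rs a idx.+1 j.
  apply: (reachkP _ _ _ _ _ _ (take idx.+1 q)).
  - by rewrite size_take size_tuple Hidx2.
  - exact: take_path.
  - by rewrite -nth_last size_take size_tuple Hidx2 /= nth_take // nth_index.
have Hdj : (depth rs a j <= idx.+1)%N.
  rewrite leqNgt; apply/negP; rewrite /depth => /(before_find 0%N).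
  rewrite nth_iota ?add0n ?Hrj //.
  by apply: ltn_trans Hidx2 Hfind.
exact: leq_ltn_trans Hdj Hidx2.
Qed.

Lemma memC (R : realFieldType) (T : finType) (rs : {set T}) (a : T -> option (R * {set T})) h j :
  (j \in C rs a h) = strong rs a j h.
Proof. by rewrite /C /Cseq mem_sort mem_enum inE. Qed.

Lemma C_props (R : realFieldType) (T : finType) (rs : {set T}) (a : T -> option (R * {set T})) h :
  reach_avoid rs a set0 h ->
  [/\ uniq (C rs a h), (0 < size (C rs a h))%N & nth h (C rs a h) (size (C rs a h)).-1 = h].
Proof.
move=> Hr.
have Hu : uniq (C rs a h) by rewrite /C /Cseq sort_uniq enum_uniq.
have Hh : h \in C rs a h by rewrite memC (strong_self _ _ _ _ _ Hr).
have Hn : (0 < size (C rs a h))%N by case: (C rs a h) Hh.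
split => //.
set s := C rs a h in Hu Hh Hn *.
have Hs : sorted (fun x y => (depth rs a x <= depth rs a y)%N) s.
  by apply: sort_sorted => x y; apply: leq_total.
case: (eqVneq (nth h s (size s).-1) h) => // Hne.
have Hy : nth h s (size s).-1 \in s by rewrite mem_nth // prednK.
rewrite memC in Hy.
have Hlt := depth_lt _ _ _ _ _ _ Hr Hy Hne.
have Hk : (index h s < size s)%N by rewrite index_mem.
have := @sorted_leq_nth _ (fun x y => (depth rs a x <= depth rs a y)%N) (fun y x z => @leq_trans (depth rs a y) (depth rs a x) (depth rs a z)) (fun x => leqnn _) h _ Hs.
move=> H.
have Hin1 : index h s \in [pred n | (n < size s)%N] by [].
have Hin2 : (size s).-1 \in [pred n | (n < size s)%N] by rewrite inE prednK.
have Hle0 : (index h s <= (size s).-1)%N by rewrite -ltnS prednK.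
have := H _ _ Hin1 Hin2 Hle0; rewrite nth_index // => Hle.
by move: (leq_ltn_trans Hle Hlt); rewrite ltnn.
Qed.

Lemma Nminus0 (R : realFieldType) (T : finType) (rs : {set T}) (a : T -> option (R * {set T})) :
  Nminus rs a set0 = Npart a.
Proof. by rewrite /Nminus big_set0 setD0. Qed.

Lemma vmax_Npart (R : realFieldType) (T : finType) (a : T -> option (R * {set T})) h :
  highest a h -> 0 <= rval a h -> vmax a (Npart a) = rval a h.
Proof.
move=> [Hp Hh] H0; apply/le_anti/andP; split.
  by apply: vmax_le => // i; rewrite inE; apply: Hh.
by apply: vmax_ge; rewrite inE.
Qed.

Lemma wi_lt (R : realFieldType) (T : finType) (rs : {set T}) (a : T -> option (R * {set T})) h :
  reach_avoid rs a set0 h -> highest a h -> 0 <= rval a h -> (wi rs a h < size (C rs a h))%N.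
Proof.
move=> Hr Hh H0.
have [Hu Hn Hl] := C_props _ _ _ _ _ Hr.
rewrite /wi -{2}(size_iota 0 (size (C rs a h))) -has_find.
apply/hasP; exists (size (C rs a h)).-1.
  by rewrite mem_iota add0n leq0n /= prednK.
by rewrite /cc Hl /Kset prednK // ltnn Nminus0 (vmax_Npart _ _ _ _ Hh H0) eqxx.
Qed.

Lemma tele (R : realFieldType) (w : nat) (A B Rc RM : nat -> R) :
  Rc 0%N = 0 -> (forall m, (m < w)%N -> Rc m.+1 + RM m <= A m.+1 - B m) ->
  A 0%N <= \sum_(j < w.+1) ((if (j < w)%N then A j - B j else A j) - Rc j) - \sum_(m < w) RM m.
Proof.
move=> H0 Hb.
have -> : \sum_(j < w.+1) ((if (j < w)%N then A j - B j else A j) - Rc j) =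
          \sum_(j < w.+1) (A j - Rc j) - \sum_(j < w) B j.
  rewrite !big_ord_recr /= ltnn.
  have -> : \sum_(i < w) ((if (widen_ord (leqnSn w) i < w)%N then A i - B i else A i) - Rc i)
          = \sum_(i < w) (A i - Rc i) - \sum_(i < w) B i.
    rewrite -sumrB; apply: eq_bigr => i _ /=; rewrite ltn_ord.
    by rewrite addrAC.
  by rewrite addrAC.
rewrite big_ord_recl /= H0 subr0.
have : 0 <= \sum_(i < w) (A (bump 0 i) - Rc (bump 0 i) - B i - RM i).
  apply: sumr_ge0 => i _; have := Hb i (ltn_ord i); rewrite /bump /= add1n => Hi; lra.
rewrite !sumrB => H; lra.
Qed.

Lemma sum_take (R : realFieldType) (T : finType) (s : seq T) (x0 : T) k (f : nat -> R) :
  uniq s -> (k <= size s)%N ->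
  \sum_(i : T) (if i \in take k s then f (index i s) else 0) = \sum_(j < k) f j.
Proof.
move=> Hu Hk.
rewrite -big_mkcond /= -big_uniq ?take_uniq //.
rewrite -{1}(mkseq_nth x0 s) /mkseq -map_take take_iota (minn_idPl Hk) big_map.
rewrite (eq_big_seq f); last first.
  move=> j; rewrite mem_iota add0n => /andP [_ Hj].
  by rewrite index_uniq // (leq_trans Hj Hk).
have -> : iota 0 k = index_iota 0 k by rewrite /index_iota subn0.
by rewrite big_mkord.
Qed.

Lemma den_gt0 (R : realFieldType) (k : nat) : 0 < (k%:R + 1 : R).
Proof. by rewrite ltr_wpDl ?ler0n ?ltr01. Qed.

Lemma Rm_ge0 (R : realFieldType) (T : finType) (rs : {set T}) (a : T -> option (R * {set T})) h m i :
  i \in Mset rs a h m -> 0 <= Rm rs a h m i.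
Proof.
move=> Hi; rewrite /Rm; apply: divr_ge0; last by apply: ltW; apply: den_gt0.
rewrite subr_ge0; apply: vmaxN_sub.
apply/subsetP => x; rewrite !inE => /orP [/eqP ->|/eqP ->]; rewrite ?Hi ?eqxx ?orbT //.
Qed.

Lemma bound (R : realFieldType) (T : finType) (rs : {set T}) (a : T -> option (R * {set T})) h g m :
  (m.+1 < size (C rs a h))%N ->
  Rc rs a h g m.+1 + \sum_(i in Mset rs a h m) Rm rs a h m i <=
  vmax a (Nminus rs a [set cc rs a h m.+1]) - vmax a (Nminus rs a (Kset rs a h m)).
Proof.
move=> Hm.
rewrite /Kset Hm /Rc /Rm.
set M := Mset rs a h m.
set c := cc rs a h m.+1.
set X := vmax a (Nminus rs a [set c]) - vmax a (Nminus rs a (c |: M)).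
set d := (#|M|%:R + 1 : R).
have Hd : 0 < d by apply: den_gt0.
have H1 : (vmax a (Nminus rs a (c |: g M)) - vmax a (Nminus rs a (c |: M))) / d <= X / d.
  rewrite ler_pM2r ?invr_gt0 // lerD2r; apply: vmaxN_sub; exact: subsetUl.
have H2 : \sum_(i in M) ((vmax a (Nminus rs a [set i; c]) - vmax a (Nminus rs a (c |: M))) / d)
          <= \sum_(i in M) (X / d).
  apply: ler_sum => i _; rewrite ler_pM2r ?invr_gt0 // lerD2r; apply: vmaxN_sub.
  by apply/subsetP => x; rewrite !inE => /eqP ->; rewrite eqxx orbT.
rewrite sumr_const in H2.
have E : X / d + X / d *+ #|M| = X.
  have Hd0 : d != 0 by apply: lt0r_neq0.
  rewrite -mulr_natr -{1}(mulr1 (X / d)) -mulrDr [1 + _]addrC.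
  exact: divfK.
rewrite -{1}E.
exact: lerD H1 H2.
Qed.

Definition Pj (R : realFieldType) (T : finType) (rs : {set T}) (a : T -> option (R * {set T})) h g j :=
  (if (j < wi rs a h)%N then vmax a (Nminus rs a [set cc rs a h j]) - vmax a (Nminus rs a (Kset rs a h j))
   else vmax a (Nminus rs a [set cc rs a h j])) - Rc rs a h g j.

Arguments Pj {R T}.

Lemma pay_ge (R : realFieldType) (T : finType) (rs : {set T}) (a : T -> option (R * {set T})) h g i :
  (if i \in take (wi rs a h).+1 (C rs a h) then Pj rs a h g (index i (C rs a h)) else 0)
   - \sum_(m < wi rs a h) (if i \in Mset rs a h m then Rm rs a h m i else 0) <= pay rs a h g i.
Proof.
have Hs : 0 <= \sum_(m < wi rs a h) (if i \in Mset rs a h m then Rm rs a h m i else 0).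
  by apply: sumr_ge0 => m _; case: ifP => // Hm; apply: Rm_ge0.
rewrite /pay.
case: ifP => _.
  by rewrite /Pj /=; lra.
case: ifP => Hhas; last by lra.
set m0 := find _ _.
have Hm0 : (m0 < wi rs a h)%N by rewrite -[X in (_ < X)%N](size_iota 0 (wi rs a h)) -has_find.
have Hin : i \in Mset rs a h m0.
  by have := nth_find 0%N Hhas; rewrite nth_iota ?add0n.
rewrite (bigD1 (Ordinal Hm0)) //= Hin.
have : 0 <= \sum_(m < wi rs a h | m != Ordinal Hm0) (if i \in Mset rs a h m then Rm rs a h m i else 0).
  by apply: sumr_ge0 => m _; case: ifP => // Hm; apply: Rm_ge0.
lra.
Qed.

Lemma fdm_ge (R : realFieldType) (T : finType) (rs : {set T}) (a : T -> option (R * {set T})) h g :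
  reach_avoid rs a set0 h -> highest a h -> 0 <= rval a h ->
  idm_revenue rs a h <= fdm_revenue rs a h g.
Proof.
move=> Hr Hh H0.
have [Hu Hn Hl] := C_props _ _ _ _ _ Hr.
have Hw := wi_lt _ _ _ _ _ Hr Hh H0.
rewrite /fdm_revenue.
have Hs := @ler_sum _ T (index_enum T) xpredT _ _ (fun i _ => pay_ge _ _ rs a h g i).
apply: le_trans Hs.
rewrite sumrB (sum_take _ _ _ h) //.
rewrite exchange_big /=.
rewrite [X in _ - X](eq_bigr (fun m : 'I_(wi rs a h) => \sum_(i in Mset rs a h m) Rm rs a h m i)); last by move=> m _; rewrite [RHS]big_mkcond.
rewrite /Pj /idm_revenue.
apply: (tele _ (wi rs a h) (fun j => vmax a (Nminus rs a [set cc rs a h j]))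
          (fun j => vmax a (Nminus rs a (Kset rs a h j))) (Rc rs a h g)
          (fun m => \sum_(i in Mset rs a h m) Rm rs a h m i)) => //.
move=> m Hm; apply: bound.
exact: leq_ltn_trans Hm Hw.
Qed.

Theorem theorem3 (R : realFieldType) (T : finType)
  (r : T -> {set T}) (rs : {set T}) (a : T -> option (R * {set T}))
  (h : T) (g : {set T} -> {set T}) :
  (forall i j : T, (j \in r i) = (i \in r j)) ->
  (forall (i : T) (x : R) (Si : {set T}), a i = Some (x, Si) -> 0 <= x /\ Si \subset r i) ->
  feasible rs a ->
  highest a h ->
  tiebreak rs a g ->
  idm_revenue rs a h <= fdm_revenue rs a h g /\
  vickrey_revenue rs a <= idm_revenue rs a h.
Proof.
move=> _ Hnn Hf Hh _.
have Hr : reach_avoid rs a set0 h by apply: Hf; case: Hh.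
have H0 : 0 <= rval a h.
  rewrite /rval; case E: (a h) => [[x S]|] //.
  by case: (Hnn _ _ _ E).
split; first exact: fdm_ge.
rewrite /vickrey_revenue /idm_revenue.
apply: le_trans (v2nd_le _ _ a _ (cc rs a h 0)) _.
apply: vmax_sub; apply/subsetP => j.
rewrite !inE => /andP [Hne /andP [Hj Hp]].
rewrite /Nminus big_set1 !inE Hp andbT.
by have := rs_notV _ _ rs a (cc rs a h 0) j Hj Hp Hne; rewrite inE.
Qed.
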